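(* Let $\alpha,\beta,\mu\in\mathbb{R}\setminus\{0\}$ with $\Delta:=\alpha^2+\beta^2-2\mu^2>0$, $x_1,x_2\in\mathbb{R}$, and let $B_\mu=B_{\alpha,\beta,\mu}$ be the Gardner breather. Then its mass is $$M[B_\mu]:=\frac12\int_{\mathbb{R}}B_\mu^2(t,x)\,dx=4\beta+2\sqrt2\,\mu\arctan\Big(\frac{2\sqrt2\,\mu\beta}{\Delta}\Big).$$
   Context: Gardner breather: with $\delta:=\alpha^2-3\beta^2$, $\gamma:=3\alpha^2-\beta^2$, $y_1:=x+\delta t+x_1$, $y_2:=x+\gamma t+x_2$, $$G_\mu:=\frac{\beta\sqrt{\alpha^2+\beta^2}}{\alpha\sqrt{\Delta}}\sin(\alpha y_1)-\frac{\sqrt2\,\mu\beta\, e^{\beta y_2}}{\Delta},\qquad F_\mu:=\cosh(\beta y_2)-\frac{\sqrt2\,\mu\beta\,[\alpha\cos(\alpha y_1)-\beta\sin(\alpha y_1)]}{\alpha\sqrt{\alpha^2+\beta^2}\sqrt{\Delta}},$$ $B_{\alpha,\beta,\mu}(t,x;x_1,x_2):=2\sqrt2\,\partial_x[\arctan(G_\mu/F_\mu)]=2\sqrt2\frac{F_\mu\partial_xG_\mu-G_\mu\partial_xF_\mu}{F_\mu^2+G_\mu^2}$, a solution of $w_t+(w_{xx}+3\mu w^2+w^3)_x=0$. *)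

(* Defs.v *)
From Stdlib Require Import Reals.
From Coquelicot Require Import Coquelicot.
Open Scope R_scope.

Definition gb_delta (a b : R) : R := a ^ 2 - 3 * b ^ 2.
Definition gb_gamma (a b : R) : R := 3 * a ^ 2 - b ^ 2.
Definition gb_Delta (a b mu : R) : R := a ^ 2 + b ^ 2 - 2 * mu ^ 2.

Definition gb_y1 (a b x1 t x : R) : R := x + gb_delta a b * t + x1.
Definition gb_y2 (a b x2 t x : R) : R := x + gb_gamma a b * t + x2.

Definition gb_G (a b mu x1 x2 t x : R) : R :=
  b * sqrt (a ^ 2 + b ^ 2) / (a * sqrt (gb_Delta a b mu)) * sin (a * gb_y1 a b x1 t x)
  - sqrt 2 * mu * b * exp (b * gb_y2 a b x2 t x) / gb_Delta a b mu.

Definition gb_F (a b mu x1 x2 t x : R) : R :=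
  cosh (b * gb_y2 a b x2 t x)
  - sqrt 2 * mu * b * (a * cos (a * gb_y1 a b x1 t x) - b * sin (a * gb_y1 a b x1 t x))
    / (a * sqrt (a ^ 2 + b ^ 2) * sqrt (gb_Delta a b mu)).

Definition breather (a b mu x1 x2 t x : R) : R :=
  let G := fun y => gb_G a b mu x1 x2 t y in
  let F := fun y => gb_F a b mu x1 x2 t y in
  2 * sqrt 2 * (F x * Derive G x - G x * Derive F x) / (F x ^ 2 + G x ^ 2).

(* Main.v *)
Require Import Defs.
From Stdlib Require Import Reals Lra.
From Coquelicot Require Import Coquelicot.
Open Scope R_scope.

Lemma param_circle (F G S : R) : S * S = F^2 + G^2 -> 0 < S -> 0 < S + F ->
  let w := G / (S + F) in
  F = S * (1 - w^2) / (1 + w^2) /\ G = 2 * S * w / (1 + w^2).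
Proof.
intros HS Sp SF w.
assert (K1 : (S+F)^2 + G^2 = 2*S*(S+F)) by nra.
assert (Hw : (1 + w^2) * (S + F) = 2 * S).
{ unfold w. replace ((1 + (G/(S+F))^2) * (S+F)) with (((S+F)^2 + G^2)/(S+F)) by (field; lra).
  rewrite K1. field. lra. }
assert (Hw2 : 1 + w^2 <> 0) by nra.
assert (K2 : w^2 * (S+F) = S - F).
{ unfold w. replace ((G/(S+F))^2 * (S+F)) with (G^2/(S+F)) by (field; lra).
  replace (G^2) with ((S-F)*(S+F)) by nra. field. lra. }
assert (K3 : w * (S+F) = G) by (unfold w; field; lra).
split.
- apply (Rmult_eq_reg_r (1+w^2)); [|auto]. unfold Rdiv. rewrite Rmult_assoc, Rinv_l; [|auto].
  rewrite Rmult_1_r. nra.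
- apply (Rmult_eq_reg_r (1+w^2)); [|auto]. unfold Rdiv. rewrite Rmult_assoc, Rinv_l; [|auto].
  rewrite Rmult_1_r. rewrite <- K3 at 1.
  replace (w*(S+F)*(1+w^2)) with (w*((1+w^2)*(S+F))) by ring. rewrite Hw. ring.
Qed.

Definition Hfun (F G F1 G1 : R -> R) (nu : R) (y : R) : R :=
  2*(F y*F1 y + G y*G1 y)/(F y^2+G y^2) - 4*nu*atan(G y/(sqrt(F y^2+G y^2)+F y)).

Lemma core (F G F1 G1 F2 G2 : R->R) (nu : R) x :
 (forall y, is_derive F y (F1 y)) -> (forall y, is_derive G y (G1 y)) ->
 is_derive F1 x (F2 x) -> is_derive G1 x (G2 x) ->
 0 < F x^2 + G x^2 -> 0 < sqrt(F x^2+G x^2) + F x ->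
 is_derive (Hfun F G F1 G1 nu) x
   ((2*(F1 x^2 + F x*F2 x + G1 x^2 + G x*G2 x)*(F x^2+G x^2) - (2*(F x*F1 x+G x*G1 x))^2)/(F x^2+G x^2)^2
    - 2*nu*(F x*G1 x - G x*F1 x)/(F x^2+G x^2)).
Proof.
intros dF dG dF1 dG1 Dp SFp.
assert (eF : Derive F x = F1 x) by (apply is_derive_unique; auto).
assert (eG : Derive G x = G1 x) by (apply is_derive_unique; auto).
assert (eF1 : Derive F1 x = F2 x) by (apply is_derive_unique; auto).
assert (eG1 : Derive G1 x = G2 x) by (apply is_derive_unique; auto).
unfold Hfun.
auto_derive.
{ repeat split; try (eexists; eauto); try (simpl; nra); try (replace (F x * (F x * 1) + G x * (G x * 1)) with (F x ^2 + G x^2) by ring; lra). }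
change (Derive (fun x0 => F x0) x) with (Derive F x).
change (Derive (fun x0 => G x0) x) with (Derive G x).
change (Derive (fun x0 => F1 x0) x) with (Derive F1 x).
change (Derive (fun x0 => G1 x0) x) with (Derive G1 x).
rewrite eF, eG, eF1, eG1.
replace (F x * (F x * 1) + G x * (G x * 1)) with (F x ^2 + G x^2) by ring.
assert (HS : sqrt (F x ^2 + G x^2) * sqrt (F x ^2 + G x^2) = F x^2 + G x^2) by (apply sqrt_sqrt; lra).
assert (Sp : 0 < sqrt (F x ^2 + G x^2)) by (apply sqrt_lt_R0; lra).
set (S := sqrt (F x ^2 + G x^2)) in *.
pose proof (param_circle (F x) (G x) S HS Sp SFp) as [HF HG].
set (w := G x / (S + F x)) in *.
clearbody w S.
assert (Hw2 : 1 + w^2 <> 0) by nra.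
rewrite HF, HG. field.
assert (0 < 1 + w^2) by nra.
split; [auto|]. split.
{ replace ((S * (1 - w ^ 2)) ^ 2 + (2 * S * w) ^ 2) with ((S*(1+w^2))^2) by ring.
  apply pow_nonzero. apply Rgt_not_eq. apply Rmult_lt_0_compat; lra. }
split; [replace (S * (1 + w ^ 2) + S * (1 - w ^ 2)) with (2*S) by ring; lra|]. split; [|lra].
replace ((S * (1 + w ^ 2) + S * (1 - w ^ 2)) * (S * (1 + w ^ 2) + S * (1 - w ^ 2)) +
  2 * S * w * (2 * S * w)) with (4*S^2*(1+w^2)) by ring.
apply Rgt_not_eq. apply Rmult_lt_0_compat; [|lra]. nra.
Qed.

Lemma Dexp_eq (F G F1 G1 F2 G2 nu : R) : 0 < F^2 + G^2 ->
 F1^2 + G1^2 - F*F2 - G*G2 + nu*(F*G1 - G*F1) = 0 ->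
 (2*(F1^2 + F*F2 + G1^2 + G*G2)*(F^2+G^2) - (2*(F*F1+G*G1))^2)/(F^2+G^2)^2
    - 2*nu*(F*G1 - G*F1)/(F^2+G^2) = 4*(F*G1 - G*F1)^2/(F^2+G^2)^2.
Proof.
intros Dp Bil.
apply Rminus_diag_uniq.
replace ((2*(F1^2 + F*F2 + G1^2 + G*G2)*(F^2+G^2) - (2*(F*F1+G*G1))^2)/(F^2+G^2)^2
    - 2*nu*(F*G1 - G*F1)/(F^2+G^2) - 4*(F*G1 - G*F1)^2/(F^2+G^2)^2)
  with (-2 * (F1^2 + G1^2 - F*F2 - G*G2 + nu*(F*G1 - G*F1)) / (F^2+G^2)) by (field; lra).
rewrite Bil. field. lra.
Qed.

Lemma main_abstract (F G F1 G1 F2 G2 : R -> R) (nu L1 L2 : R) :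
 (forall y, is_derive F y (F1 y)) -> (forall y, is_derive G y (G1 y)) ->
 (forall y, is_derive F1 y (F2 y)) -> (forall y, is_derive G1 y (G2 y)) ->
 (forall y, 0 < F y^2 + G y^2) -> (forall y, 0 < sqrt(F y^2+G y^2) + F y) ->
 (forall y, F1 y^2 + G1 y^2 - F y*F2 y - G y*G2 y + nu*(F y*G1 y - G y*F1 y) = 0) ->
 is_lim (Hfun F G F1 G1 nu) m_infty L1 -> is_lim (Hfun F G F1 G1 nu) p_infty L2 ->
 is_RInt_gen (fun y => 4*(F y*G1 y - G y*F1 y)^2/(F y^2+G y^2)^2)
   (Rbar_locally m_infty) (Rbar_locally p_infty) (L2 - L1).
Proof.
intros dF dG dF1 dG1 Dp SFp Bil l1 l2.
assert (dH : forall y, is_derive (Hfun F G F1 G1 nu) y (4*(F y*G1 y - G y*F1 y)^2/(F y^2+G y^2)^2)).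
{ intro y. rewrite <- Dexp_eq with (F2 := F2 y) (G2 := G2 y) (nu := nu); auto.
  apply core; auto. }
assert (eH : forall y, Derive (Hfun F G F1 G1 nu) y = 4*(F y*G1 y - G y*F1 y)^2/(F y^2+G y^2)^2).
{ intro y. apply is_derive_unique. auto. }
apply is_RInt_gen_ext with (f := Derive (Hfun F G F1 G1 nu)).
{ apply filter_forall. intros ab z _. apply eH. }
apply is_RInt_gen_Derive.
- apply filter_forall. intros ab z _. eexists. apply dH.
- apply filter_forall. intros ab z _.
  apply continuous_ext with (f := fun y => 4*(F y*G1 y - G y*F1 y)^2/(F y^2+G y^2)^2).
  { intro; symmetry; apply eH. }
  apply (@ex_derive_continuous R_AbsRing R_NormedModule).
  assert (Dz := Dp z).
  auto_derive. repeat split; try (eexists; eauto).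
  replace (F z * (F z * 1) + G z * (G z * 1)) with (F z ^2 + G z^2) by ring.
  apply Rgt_not_eq. apply Rmult_lt_0_compat; lra.
- exact l1.
- exact l2.
Qed.

Lemma lim_mult_f (f g : R -> R) (x : Rbar) (a b : R) :
  is_lim f x a -> is_lim g x b -> is_lim (fun y => f y * g y) x (a * b).
Proof. intros. apply (is_lim_mult f g x a b); auto. exact I. Qed.

Lemma lim_div_f (f g : R -> R) (x : Rbar) (a b : R) :
  is_lim f x a -> is_lim g x b -> b <> 0 -> is_lim (fun y => f y / g y) x (a / b).
Proof. intros. apply (is_lim_div f g x a b); auto.
  intro H'; apply H1; injection H'; auto. exact I. Qed.

Lemma lim_form (x : Rbar) (e u : R -> R) (al be C : R) :
  is_lim e x 0 -> (forall y, 0 < e y) -> (forall y, Rabs (u y) <= C) ->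
  is_lim (fun y => al + u y * e y + be * e y ^ 2) x al.
Proof.
intros le ep ub.
assert (H : is_lim (fun y => al + u y * e y + be * e y ^ 2) x (al + 0 + be * (0 * 0))).
2:{ replace (al + 0 + be * (0 * 0)) with al in H by ring. exact H. }
apply is_lim_plus'. apply is_lim_plus'. apply is_lim_const.
- apply is_lim_le_le_loc with (f := fun y => - C * e y) (g := fun y => C * e y).
  + apply filter_forall. intro y. pose proof (ub y). pose proof (ep y).
    assert (H2 : Rabs (u y * e y) <= C * e y).
    { rewrite Rabs_mult, (Rabs_right (e y)) by lra. apply Rmult_le_compat_r; lra. }
    apply Rabs_le_between in H2. lra.
  + replace (Finite 0) with (Finite (- C * 0)) by (f_equal; ring). apply lim_mult_f; auto. apply is_lim_const.
  + replace (Finite 0) with (Finite (C * 0)) by (f_equal; ring). apply lim_mult_f; auto. apply is_lim_const.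
- apply lim_mult_f. apply is_lim_const.
  apply is_lim_ext with (f := fun y => e y * e y). intro; ring.
  apply lim_mult_f; auto.
Qed.

Lemma lim_sq (f : R -> R) (x : Rbar) (a : R) :
  is_lim f x a -> is_lim (fun y => f y ^ 2) x (a ^ 2).
Proof. intros. apply is_lim_ext with (f := fun y => f y * f y). intro; ring.
  replace (a^2) with (a*a) by ring. apply lim_mult_f; auto. Qed.

Lemma lim_Hfun (x : Rbar) (fE gE f1E g1E : R -> R) (lf lg lf1 lg1 nu : R) :
  is_lim fE x lf -> is_lim gE x lg -> is_lim f1E x lf1 -> is_lim g1E x lg1 -> 0 < lf ->
  is_lim (Hfun fE gE f1E g1E nu) x
    (2*(lf*lf1+lg*lg1)/(lf^2+lg^2) - 4*nu*atan(lg/(sqrt(lf^2+lg^2)+lf))).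
Proof.
intros hf hg hf1 hg1 lp.
assert (Dl : is_lim (fun y => fE y ^ 2 + gE y ^ 2) x (lf^2 + lg^2)).
{ apply is_lim_plus'; apply lim_sq; auto. }
assert (Dpos : 0 < lf^2 + lg^2) by nra.
unfold Hfun. apply is_lim_minus'.
- apply lim_div_f; [| exact Dl | lra].
  apply lim_mult_f. apply is_lim_const. apply is_lim_plus'; apply lim_mult_f; auto.
- apply lim_mult_f. apply is_lim_const.
  apply (is_lim_comp_continuous (fun y => gE y / (sqrt (fE y ^ 2 + gE y ^ 2) + fE y)) atan).
  + apply lim_div_f; auto.
    * apply is_lim_plus'; auto.
      apply (is_lim_comp_continuous (fun y => fE y ^ 2 + gE y ^ 2) sqrt); auto.
      apply continuous_sqrt.
    * pose proof (sqrt_pos (lf^2+lg^2)). lra.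
  + apply continuous_atan.
Qed.

Lemma Hfun_scale (F G F1 G1 : R -> R) (nu : R) (lam : R -> R) (y : R) :
  0 < lam y -> 0 < F y ^ 2 + G y ^ 2 ->  0 < sqrt (F y^2 + G y^2) + F y ->
  Hfun F G F1 G1 nu y = Hfun (fun z => lam z * F z) (fun z => lam z * G z)
     (fun z => lam z * F1 z) (fun z => lam z * G1 z) nu y.
Proof.
intros lp Dp Sp. unfold Hfun.
replace ((lam y * F y) ^ 2 + (lam y * G y) ^ 2) with (lam y ^ 2 * (F y ^2 + G y^2)) by ring.
rewrite sqrt_mult by (try apply pow2_ge_0; lra).
rewrite sqrt_pow2 by lra.
replace (lam y * sqrt (F y ^ 2 + G y ^ 2) + lam y * F y)
  with (lam y * (sqrt (F y ^ 2 + G y ^ 2) + F y)) by ring.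
replace (lam y * G y / (lam y * (sqrt (F y ^ 2 + G y ^ 2) + F y)))
  with (G y / (sqrt (F y ^ 2 + G y ^ 2) + F y)) by (field; split; lra).
f_equal. field. split; lra.
Qed.

Lemma atan_half (u : R) : 2 * atan (u / (sqrt (1 + u^2) + 1)) = atan u.
Proof.
set (S := sqrt (1 + u^2)).
assert (HS : S * S = 1 + u^2) by (apply sqrt_sqrt; nra).
assert (Sp : 0 <= S) by apply sqrt_pos.
assert (S1 : 1 <= S) by nra.
assert (uS : - (S + 1) < u < S + 1) by (split; nra).
set (w := u / (S + 1)).
assert (Kw : w * (S + 1) = u) by (unfold w; field; lra).
assert (wb : -1 < w < 1) by (split; nra).
assert (ab : - (PI/4) < atan w < PI/4).
{ rewrite <- atan_1. split.
  - replace (- atan 1) with (atan (-1)) by apply atan_opp. apply atan_increasing. lra.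
  - apply atan_increasing. lra. }
assert (PI4 : 0 < PI) by apply PI_RGT_0.
assert (c1 : cos (atan w) <> 0). { apply Rgt_not_eq. apply cos_gt_0; lra. }
assert (c2 : cos (2 * atan w) <> 0). { apply Rgt_not_eq. apply cos_gt_0; lra. }
assert (t1 : 1 - tan (atan w) * tan (atan w) <> 0). { rewrite tan_atan. nra. }
rewrite <- (atan_tan (2 * atan w)) by lra.
f_equal. rewrite tan_2a by auto. rewrite tan_atan.
assert (K1 : (1 - w * w) * (S + 1) = 2).
{ assert (w * w * (S+1) * (S+1) = u * u) by (rewrite <- Kw; ring). nra. }
apply (Rmult_eq_reg_r (1 - w*w)); [|rewrite tan_atan in t1; auto].
unfold Rdiv. rewrite Rmult_assoc, Rinv_l by (rewrite tan_atan in t1; auto).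
rewrite <- Kw. 
replace (2 * w * 1) with (w * ((1 - w * w) * (S + 1))) by (rewrite K1; ring). ring.
Qed.

Definition cK (a b mu : R) := sqrt 2 * mu * b / (a * sqrt (a^2+b^2) * sqrt (gb_Delta a b mu)).
Definition cm (a b mu : R) := b * sqrt (a^2+b^2) / (a * sqrt (gb_Delta a b mu)).
Definition cn (a b mu : R) := sqrt 2 * mu * b / gb_Delta a b mu.

Definition fF1 a b mu x1 x2 t y :=
  b * (exp (b * gb_y2 a b x2 t y) - exp (- (b * gb_y2 a b x2 t y))) / 2
  + cK a b mu * a * (a * sin (a * gb_y1 a b x1 t y) + b * cos (a * gb_y1 a b x1 t y)).
Definition fF2 a b mu x1 x2 t y :=
  b^2 * (exp (b * gb_y2 a b x2 t y) + exp (- (b * gb_y2 a b x2 t y))) / 2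
  + cK a b mu * a^2 * (a * cos (a * gb_y1 a b x1 t y) - b * sin (a * gb_y1 a b x1 t y)).
Definition fG1 a b mu x1 x2 t y :=
  cm a b mu * a * cos (a * gb_y1 a b x1 t y) - cn a b mu * b * exp (b * gb_y2 a b x2 t y).
Definition fG2 a b mu x1 x2 t y :=
  - cm a b mu * a^2 * sin (a * gb_y1 a b x1 t y) - cn a b mu * b^2 * exp (b * gb_y2 a b x2 t y).

Lemma dF a b mu x1 x2 t y : is_derive (gb_F a b mu x1 x2 t) y (fF1 a b mu x1 x2 t y).
Proof.
unfold gb_F, fF1, gb_y1, gb_y2, cosh, cK. auto_derive. auto.
replace (a*(a*1)+b*(b*1)) with (a^2+b^2) by ring. unfold Rdiv. ring.
Qed.


Lemma dF1 a b mu x1 x2 t y : is_derive (fF1 a b mu x1 x2 t) y (fF2 a b mu x1 x2 t y).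
Proof.
unfold fF1, fF2, gb_y1, gb_y2, cK. auto_derive. auto.
replace (a*(a*1)+b*(b*1)) with (a^2+b^2) by ring. unfold Rdiv. ring.
Qed.

Lemma dG a b mu x1 x2 t y : is_derive (gb_G a b mu x1 x2 t) y (fG1 a b mu x1 x2 t y).
Proof.
unfold gb_G, fG1, gb_y1, gb_y2, cm, cn. auto_derive. auto.
replace (a*(a*1)+b*(b*1)) with (a^2+b^2) by ring. unfold Rdiv. ring.
Qed.

Lemma dG1 a b mu x1 x2 t y : is_derive (fG1 a b mu x1 x2 t) y (fG2 a b mu x1 x2 t y).
Proof.
unfold fG1, fG2, gb_y1, gb_y2, cm, cn. auto_derive. auto.
replace (a*(a*1)+b*(b*1)) with (a^2+b^2) by ring. unfold Rdiv. ring.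
Qed.

Lemma bil (a b nu r1 r2 s c E K m n : R) :
  a <> 0 -> r1 <> 0 -> r2 <> 0 -> E <> 0 ->
  s^2+c^2=1 -> r1^2 = a^2+b^2 -> r2^2 = r1^2 - nu^2 ->
  K = nu*b/(a*r1*r2) -> m = b*r1/(a*r2) -> n = nu*b/(r2^2) ->
  (b*(E - /E)/2 + K*a*(a*s+b*c))^2 + (m*a*c - n*b*E)^2
  - ((E + /E)/2 - K*(a*c - b*s)) * (b^2*(E + /E)/2 + K*a^2*(a*c-b*s))
  - (m*s - n*E) * (- m*a^2*s - n*b^2*E)
  + nu*(((E + /E)/2 - K*(a*c - b*s)) * (m*a*c - n*b*E) - (m*s - n*E) * (b*(E - /E)/2 + K*a*(a*s+b*c))) = 0.
Proof.
intros Ha H1 H2 HE Hc Hr1 Hr2 HK Hm Hn. subst K m n.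
assert (Hd : a*r1^2*r2^3*E <> 0) by (repeat apply Rmult_integral_contrapositive_currified; try apply pow_nonzero; auto).
apply (Rmult_eq_reg_r (a*r1^2*r2^3*E)); [|exact Hd]. rewrite Rmult_0_l.
transitivity ((1*a*b^2*r1^4*r2*E - 1*a*b^2*nu^2*r1^2*r2*E + 1*a*b^4*nu^2*r2*E + 1*a^3*b^2*nu^2*r2*E) * (c^2+s^2-1)
 + ((1/2)*b^2*nu*r1*r2^2*s - (1/2)*b^2*nu*r1*r2^2*s*E^2 + (1/2)*a*b*nu*r1*r2^2*c + (1/2)*a*b*nu*r1*r2^2*c*E^2 - 1*a*b^2*r2^3*E + 1*a*b^2*r1^2*r2*E - 2*a*b^2*nu^2*r2*E) * (r1^2-a^2-b^2)
 + (- 1*b^4*nu*r1*s*E^2 + 2*a*b^3*nu*r1*c*E^2 - 1*a*b^4*r2*E + 1*a^2*b^2*nu*r1*s*E^2 - 1*a^3*b^2*r2*E) * (r2^2-r1^2+nu^2)).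
- field. auto.
- replace (c^2+s^2-1) with 0 by lra. replace (r1^2-a^2-b^2) with 0 by lra. replace (r2^2-r1^2+nu^2) with 0 by lra. ring.
Qed.

Lemma Fform a b mu x1 x2 t y : gb_F a b mu x1 x2 t y =
  (exp (b * gb_y2 a b x2 t y) + / exp (b * gb_y2 a b x2 t y))/2
  - cK a b mu * (a * cos (a * gb_y1 a b x1 t y) - b * sin (a * gb_y1 a b x1 t y)).
Proof. unfold gb_F, cosh, cK. rewrite exp_Ropp. unfold Rdiv. ring. Qed.

Lemma Gform a b mu x1 x2 t y : gb_G a b mu x1 x2 t y =
  cm a b mu * sin (a * gb_y1 a b x1 t y) - cn a b mu * exp (b * gb_y2 a b x2 t y).
Proof. unfold gb_G, cm, cn. unfold Rdiv. ring. Qed.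

Lemma bil_conc a b mu x1 x2 t y : a <> 0 -> 0 < gb_Delta a b mu ->
  fF1 a b mu x1 x2 t y ^2 + fG1 a b mu x1 x2 t y ^2
  - gb_F a b mu x1 x2 t y * fF2 a b mu x1 x2 t y - gb_G a b mu x1 x2 t y * fG2 a b mu x1 x2 t y
  + (sqrt 2 * mu) * (gb_F a b mu x1 x2 t y * fG1 a b mu x1 x2 t y - gb_G a b mu x1 x2 t y * fF1 a b mu x1 x2 t y) = 0.
Proof.
intros Ha HD.
rewrite Fform, Gform. unfold fF1, fF2, fG1, fG2. rewrite exp_Ropp.
assert (Hab : 0 < a^2 + b^2) by (assert (0 < a^2) by (apply pow2_gt_0; auto); pose proof (pow2_ge_0 b); lra).
apply bil with (r1 := sqrt (a^2+b^2)) (r2 := sqrt (gb_Delta a b mu)).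
- auto.
- apply Rgt_not_eq, sqrt_lt_R0; auto.
- apply Rgt_not_eq, sqrt_lt_R0; auto.
- apply Rgt_not_eq, exp_pos.
- rewrite <- !Rsqr_pow2. apply sin2_cos2.
- rewrite <- Rsqr_pow2. apply Rsqr_sqrt. lra.
- rewrite <- !Rsqr_pow2. rewrite !Rsqr_sqrt by lra. rewrite Rsqr_mult. rewrite (Rsqr_sqrt 2) by lra. rewrite Rsqr_sqrt by (rewrite !Rsqr_pow2; lra).
  unfold gb_Delta, Rsqr. ring.
- reflexivity.
- reflexivity.
- unfold cn. rewrite <- Rsqr_pow2, Rsqr_sqrt by lra. reflexivity.
Qed.

Lemma Fpos_gen (E c q : R) : 0 < E -> -1 <= c <= 1 -> 0 < (E + /E)/2 + q^2*E - q*c.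
Proof.
intros Ep cb.
assert (iEp : 0 < /E) by (apply Rinv_0_lt_compat; auto).
assert (EiE : E * /E = 1) by (field; lra).
assert (qc : q * c <= Rabs q).
{ apply Rle_trans with (Rabs (q*c)); [apply Rle_abs|]. rewrite Rabs_mult.
  pose proof (Rabs_pos q). assert (Rabs c <= 1) by (apply Rabs_le; lra). nra. }
assert (qq : Rabs q * Rabs q = q^2) by (rewrite <- Rabs_mult; rewrite Rabs_right; [ring | nra]).
assert (K : 0 < E * (/E/2 + q^2*E - Rabs q)).
{ replace (E * (/E/2 + q^2*E - Rabs q)) with ((Rabs q * E - 1/2)^2 + 1/4) by (rewrite <- qq; field; lra).
  nra. }
assert (0 < /E/2 + q^2*E - Rabs q).
{ apply (Rmult_lt_reg_l E); lra. }
lra.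
Qed.

Lemma F_pos_of_G0 a b mu x1 x2 t y : a <> 0 -> 0 < b -> 0 < gb_Delta a b mu ->
  gb_G a b mu x1 x2 t y = 0 -> 0 < gb_F a b mu x1 x2 t y.
Proof.
intros Ha Hb HD HG. rewrite Gform in HG. rewrite Fform.
assert (Hab : 0 < a^2 + b^2) by (assert (0 < a^2) by (apply pow2_gt_0; auto); pose proof (pow2_ge_0 b); lra).
set (s := sin (a * gb_y1 a b x1 t y)) in *.
set (c := cos (a * gb_y1 a b x1 t y)) in *.
set (E := exp (b * gb_y2 a b x2 t y)) in *.
assert (Ep : 0 < E) by apply exp_pos.
assert (cb : -1 <= c <= 1) by apply COS_bound.
assert (r1p : 0 < sqrt (a^2+b^2)) by (apply sqrt_lt_R0; auto).
assert (r2p : 0 < sqrt (gb_Delta a b mu)) by (apply sqrt_lt_R0; auto).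
assert (cmz : cm a b mu <> 0).
{ unfold cm. unfold Rdiv. apply Rmult_integral_contrapositive_currified.
  - apply Rmult_integral_contrapositive_currified; lra.
  - apply Rinv_neq_0_compat. apply Rmult_integral_contrapositive_currified; lra. }
assert (Hs : s = cn a b mu * E / cm a b mu) by (field_simplify_eq; auto; lra).
rewrite Hs.
set (q := sqrt 2 * mu * b / (sqrt (a^2+b^2) * sqrt (gb_Delta a b mu))).
replace (cK a b mu * (a * c - b * (cn a b mu * E / cm a b mu))) with (q * c - q^2 * E).
- pose proof (Fpos_gen E c q Ep cb). lra.
- unfold q, cK, cn, cm. set (r2 := sqrt (gb_Delta a b mu)) in *.
  set (r1 := sqrt (a^2+b^2)) in *.
  replace (gb_Delta a b mu) with (r2 * r2) by (unfold r2; apply sqrt_sqrt; lra).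
  field. repeat split; lra.
Qed.

Lemma DS_pos (F G : R) : (G = 0 -> 0 < F) -> 0 < F^2+G^2 /\ 0 < sqrt (F^2+G^2) + F.
Proof.
intros H.
destruct (Req_dec G 0) as [HG|HG].
- pose proof (H HG). subst G. split; [nra|]. pose proof (sqrt_pos (F^2+0^2)). lra.
- assert (0 < G^2) by (apply pow2_gt_0; auto).
  assert (Dp : 0 < F^2+G^2) by (pose proof (pow2_ge_0 F); lra). split; [auto|].
  assert (HS := sqrt_sqrt (F^2+G^2) (Rlt_le _ _ Dp)).
  pose proof (sqrt_pos (F^2+G^2)).
  destruct (Rle_or_lt (sqrt (F^2+G^2)) (-F)); [|lra].
  exfalso. assert (sqrt (F^2+G^2) * sqrt (F^2+G^2) <= F*F) by nra. nra.
Qed.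

Lemma lim_e_p a b x2 t : 0 < b ->
  is_lim (fun y => exp (- (b * gb_y2 a b x2 t y))) p_infty 0.
Proof.
intros Hb.
apply (is_lim_comp exp (fun y => - (b * gb_y2 a b x2 t y)) p_infty 0 m_infty).
- apply is_lim_exp_m.
- apply is_lim_spec. intro M. simpl. exists (- M / b - (gb_gamma a b * t + x2)).
  intros y Hy. unfold gb_y2.
  assert (b * (y + gb_gamma a b * t + x2) > - M).
  { apply Rmult_lt_compat_l with (r := b) in Hy; auto.
    replace (b * (- M / b - (gb_gamma a b * t + x2))) with (- M - b * (gb_gamma a b * t + x2)) in Hy by (field; lra).
    nra. }
  lra.
- apply filter_forall. intros y H. discriminate.
Qed.

Lemma lim_e_m a b x2 t : 0 < b ->
  is_lim (fun y => exp (b * gb_y2 a b x2 t y)) m_infty 0.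
Proof.
intros Hb.
apply (is_lim_comp exp (fun y => b * gb_y2 a b x2 t y) m_infty 0 m_infty).
- apply is_lim_exp_m.
- apply is_lim_spec. intro M. simpl. exists (M / b - (gb_gamma a b * t + x2)).
  intros y Hy. unfold gb_y2.
  apply Rmult_lt_compat_l with (r := b) in Hy; auto.
  replace (b * (M / b - (gb_gamma a b * t + x2))) with (M - b * (gb_gamma a b * t + x2)) in Hy by (field; lra).
  nra.
- apply filter_forall. intros y H. discriminate.
Qed.

Lemma bnd2 k p q th : Rabs (k*(p*cos th + q*sin th)) <= Rabs k * (Rabs p + Rabs q).
Proof.
rewrite Rabs_mult. apply Rmult_le_compat_l; [apply Rabs_pos|].
eapply Rle_trans; [apply Rabs_triang|]. rewrite !Rabs_mult.
pose proof (Rabs_pos p). pose proof (Rabs_pos q).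
assert (Rabs (cos th) <= 1) by (apply Rabs_le; apply COS_bound).
assert (Rabs (sin th) <= 1) by (apply Rabs_le; apply SIN_bound).
nra.
Qed.

Lemma lim_plus a b mu x1 x2 t : a <> 0 -> 0 < b -> 0 < gb_Delta a b mu ->
  is_lim (Hfun (gb_F a b mu x1 x2 t) (gb_G a b mu x1 x2 t) (fF1 a b mu x1 x2 t) (fG1 a b mu x1 x2 t) (sqrt 2 * mu))
    p_infty
    (2*(1/2*(b/2) + (- cn a b mu)*(- cn a b mu * b))/((1/2)^2+(- cn a b mu)^2)
      - 4*(sqrt 2 * mu)*atan((- cn a b mu)/(sqrt((1/2)^2+(- cn a b mu)^2)+1/2))).
Proof.
intros Ha Hb HD.
set (e := fun y => exp (- (b * gb_y2 a b x2 t y))).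
apply is_lim_ext with (f := Hfun (fun z => e z * gb_F a b mu x1 x2 t z) (fun z => e z * gb_G a b mu x1 x2 t z)
   (fun z => e z * fF1 a b mu x1 x2 t z) (fun z => e z * fG1 a b mu x1 x2 t z) (sqrt 2 * mu)).
{ intro y. destruct (DS_pos (gb_F a b mu x1 x2 t y) (gb_G a b mu x1 x2 t y)) as [D1 D2].
  { apply F_pos_of_G0; auto. }
  symmetry. apply Hfun_scale; auto. apply exp_pos. }
assert (le := lim_e_p a b x2 t Hb).
assert (ep : forall y, 0 < e y) by (intro; apply exp_pos).
apply lim_Hfun; [ | | | | lra].
- apply is_lim_ext with (f := fun y => 1/2 + (- cK a b mu * (a * cos (a * gb_y1 a b x1 t y) + (- b) * sin (a * gb_y1 a b x1 t y))) * e y + 1/2 * e y ^ 2).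
  { intro y. rewrite Fform. unfold e. rewrite exp_Ropp. field. apply Rgt_not_eq, exp_pos. }
  apply lim_form with (C := Rabs (- cK a b mu) * (Rabs a + Rabs (-b))); auto. intro; apply bnd2.
- apply is_lim_ext with (f := fun y => - cn a b mu + (cm a b mu * (0 * cos (a * gb_y1 a b x1 t y) + 1 * sin (a * gb_y1 a b x1 t y))) * e y + 0 * e y ^ 2).
  { intro y. rewrite Gform. unfold e. rewrite exp_Ropp. field. apply Rgt_not_eq, exp_pos. }
  apply lim_form with (C := Rabs (cm a b mu) * (Rabs 0 + Rabs 1)); auto. intro; apply bnd2.
- apply is_lim_ext with (f := fun y => b/2 + (cK a b mu * a * (b * cos (a * gb_y1 a b x1 t y) + a * sin (a * gb_y1 a b x1 t y))) * e y + (- b / 2) * e y ^ 2).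
  { intro y. unfold fF1. unfold e. rewrite exp_Ropp. field. apply Rgt_not_eq, exp_pos. }
  apply lim_form with (C := Rabs (cK a b mu * a) * (Rabs b + Rabs a)); auto. intro; apply bnd2.
- apply is_lim_ext with (f := fun y => - cn a b mu * b + (cm a b mu * a * (1 * cos (a * gb_y1 a b x1 t y) + 0 * sin (a * gb_y1 a b x1 t y))) * e y + 0 * e y ^ 2).
  { intro y. unfold fG1. unfold e. rewrite exp_Ropp. field. apply Rgt_not_eq, exp_pos. }
  apply lim_form with (C := Rabs (cm a b mu * a) * (Rabs 1 + Rabs 0)); auto. intro; apply bnd2.
Qed.

Lemma lim_minus a b mu x1 x2 t : a <> 0 -> 0 < b -> 0 < gb_Delta a b mu ->
  is_lim (Hfun (gb_F a b mu x1 x2 t) (gb_G a b mu x1 x2 t) (fF1 a b mu x1 x2 t) (fG1 a b mu x1 x2 t) (sqrt 2 * mu))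
    m_infty
    (2*(1/2*(- b/2) + 0*0)/((1/2)^2+0^2)
      - 4*(sqrt 2 * mu)*atan(0/(sqrt((1/2)^2+0^2)+1/2))).
Proof.
intros Ha Hb HD.
set (e := fun y => exp (b * gb_y2 a b x2 t y)).
apply is_lim_ext with (f := Hfun (fun z => e z * gb_F a b mu x1 x2 t z) (fun z => e z * gb_G a b mu x1 x2 t z)
   (fun z => e z * fF1 a b mu x1 x2 t z) (fun z => e z * fG1 a b mu x1 x2 t z) (sqrt 2 * mu)).
{ intro y. destruct (DS_pos (gb_F a b mu x1 x2 t y) (gb_G a b mu x1 x2 t y)) as [D1 D2].
  { apply F_pos_of_G0; auto. }
  symmetry. apply Hfun_scale; auto. apply exp_pos. }
assert (le := lim_e_m a b x2 t Hb).
assert (ep : forall y, 0 < e y) by (intro; apply exp_pos).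
apply lim_Hfun; [ | | | | lra].
- apply is_lim_ext with (f := fun y => 1/2 + (- cK a b mu * (a * cos (a * gb_y1 a b x1 t y) + (- b) * sin (a * gb_y1 a b x1 t y))) * e y + 1/2 * e y ^ 2).
  { intro y. rewrite Fform. unfold e. field. apply Rgt_not_eq, exp_pos. }
  apply lim_form with (C := Rabs (- cK a b mu) * (Rabs a + Rabs (-b))); auto. intro; apply bnd2.
- apply is_lim_ext with (f := fun y => 0 + (cm a b mu * (0 * cos (a * gb_y1 a b x1 t y) + 1 * sin (a * gb_y1 a b x1 t y))) * e y + (- cn a b mu) * e y ^ 2).
  { intro y. rewrite Gform. unfold e. field. }
  apply lim_form with (C := Rabs (cm a b mu) * (Rabs 0 + Rabs 1)); auto. intro; apply bnd2.
- apply is_lim_ext with (f := fun y => - b/2 + (cK a b mu * a * (b * cos (a * gb_y1 a b x1 t y) + a * sin (a * gb_y1 a b x1 t y))) * e y + (b / 2) * e y ^ 2).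
  { intro y. unfold fF1. unfold e. rewrite exp_Ropp. field. apply Rgt_not_eq, exp_pos. }
  apply lim_form with (C := Rabs (cK a b mu * a) * (Rabs b + Rabs a)); auto. intro; apply bnd2.
- apply is_lim_ext with (f := fun y => 0 + (cm a b mu * a * (1 * cos (a * gb_y1 a b x1 t y) + 0 * sin (a * gb_y1 a b x1 t y))) * e y + (- cn a b mu * b) * e y ^ 2).
  { intro y. unfold fG1. unfold e. field. }
  apply lim_form with (C := Rabs (cm a b mu * a) * (Rabs 1 + Rabs 0)); auto. intro; apply bnd2.
Qed.

Lemma value_eq (b nu n : R) :
  (2*(1/2*(b/2) + (- n)*(- n * b))/((1/2)^2+(- n)^2)
      - 4*nu*atan((- n)/(sqrt((1/2)^2+(- n)^2)+1/2)))
  - (2*(1/2*(- b/2) + 0*0)/((1/2)^2+0^2)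
      - 4*nu*atan(0/(sqrt((1/2)^2+0^2)+1/2)))
  = 4 * b + 2 * nu * atan (2 * n).
Proof.
assert (P : 0 < (1/2)^2 + (-n)^2) by (pose proof (pow2_ge_0 (-n)); lra).
assert (Sq : sqrt (1 + (2*n)^2) = 2 * sqrt ((1/2)^2+(-n)^2)).
{ replace (1 + (2*n)^2) with (2^2 * ((1/2)^2+(-n)^2)) by field.
  rewrite sqrt_mult by (try apply pow2_ge_0; lra). rewrite sqrt_pow2 by lra. ring. }
assert (Hw : (- n)/(sqrt((1/2)^2+(- n)^2)+1/2) = - ((2*n)/(sqrt (1 + (2*n)^2) + 1))).
{ rewrite Sq. pose proof (sqrt_pos ((1/2)^2+(-n)^2)). field. lra. }
rewrite Hw, atan_opp.
replace (0/(sqrt((1/2)^2+0^2)+1/2)) with 0 by (pose proof (sqrt_pos ((1/2)^2+0^2)); field; lra).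
rewrite atan_0.
rewrite <- (atan_half (2*n)).
field. lra.
Qed.

Theorem lemma2p2 (a b mu x1 x2 : R) :
  a <> 0 -> 0 < b -> mu <> 0 -> 0 < gb_Delta a b mu ->
  forall t : R,
  is_RInt_gen (fun x => / 2 * (breather a b mu x1 x2 t x) ^ 2)
    (Rbar_locally m_infty) (Rbar_locally p_infty)
    (4 * b + 2 * sqrt 2 * mu * atan (2 * sqrt 2 * mu * b / gb_Delta a b mu)).
Proof.
intros Ha Hb Hmu HD t.
assert (Dp : forall y, 0 < gb_F a b mu x1 x2 t y ^2 + gb_G a b mu x1 x2 t y ^2 /\
   0 < sqrt (gb_F a b mu x1 x2 t y ^2 + gb_G a b mu x1 x2 t y ^2) + gb_F a b mu x1 x2 t y).
{ intro y. apply DS_pos. apply F_pos_of_G0; auto. }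
pose proof (main_abstract (gb_F a b mu x1 x2 t) (gb_G a b mu x1 x2 t) (fF1 a b mu x1 x2 t) (fG1 a b mu x1 x2 t)
  (fF2 a b mu x1 x2 t) (fG2 a b mu x1 x2 t) (sqrt 2 * mu) _ _
  (dF a b mu x1 x2 t) (dG a b mu x1 x2 t) (dF1 a b mu x1 x2 t) (dG1 a b mu x1 x2 t)
  (fun y => proj1 (Dp y)) (fun y => proj2 (Dp y)) (fun y => bil_conc a b mu x1 x2 t y Ha HD)
  (lim_minus a b mu x1 x2 t Ha Hb HD) (lim_plus a b mu x1 x2 t Ha Hb HD)) as HR.
rewrite value_eq in HR.
replace (2 * sqrt 2 * mu * b / gb_Delta a b mu) with (2 * cn a b mu) by (unfold cn; field; lra).
replace (2 * sqrt 2 * mu) with (2 * (sqrt 2 * mu)) by ring.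
revert HR. apply is_RInt_gen_ext.
apply filter_forall. intros ab y _.
unfold breather. cbv beta zeta.
assert (eG : Derive (fun z => gb_G a b mu x1 x2 t z) y = fG1 a b mu x1 x2 t y) by (apply is_derive_unique; apply dG).
assert (eF : Derive (fun z => gb_F a b mu x1 x2 t z) y = fF1 a b mu x1 x2 t y) by (apply is_derive_unique; apply dF).
rewrite eG, eF.
assert (s2 : sqrt 2 * sqrt 2 = 2) by (apply sqrt_sqrt; lra).
destruct (Dp y) as [D1 _].
replace ((2 * sqrt 2 * (gb_F a b mu x1 x2 t y * fG1 a b mu x1 x2 t y - gb_G a b mu x1 x2 t y * fF1 a b mu x1 x2 t y) /
   (gb_F a b mu x1 x2 t y ^ 2 + gb_G a b mu x1 x2 t y ^ 2)) ^ 2)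
  with (4 * (sqrt 2 * sqrt 2) * (gb_F a b mu x1 x2 t y * fG1 a b mu x1 x2 t y - gb_G a b mu x1 x2 t y * fF1 a b mu x1 x2 t y)^2 /
   (gb_F a b mu x1 x2 t y ^ 2 + gb_G a b mu x1 x2 t y ^ 2)^2) by (field; lra).
rewrite s2. match goal with |- ?l = ?r => change (@eq R l r) end. field. lra.
Qed.
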